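(* Let $Y,Y'\in\mathfrak o(V,K)$. The special tuples $(Y,e_{n+2})$ and $(Y',e_{n+2})$ are equivalent if and only if there exist $P\in O(V,K)_{e_{n+2}}$ and a vector $w\in V$ such that $$Y'=P\,(Y+L_{w,e_{n+2}})\,P^{-1}.$$ Moreover, in any equivalence between them (i.e. any data $P,v,p,v_0$ as in the definition of equivalence) the real number $v_0$ equals $0$.
   Context: Let $n\ge 0$ be an integer and let $\widetilde K$ be a real symmetric $n\times n$ matrix with $\widetilde K^2=I_n$. Let $V=\mathbb R^{n+2}$ with standard basis $e_1,\dots,e_{n+2}$, and let $K=\begin{pmatrix}0&0&1\\0&\widetilde K&0\\1&0&0\end{pmatrix}$ (block sizes $1,n,1$). For $x,w\in V$ write $x^*=x^TK$ and $L_{u,w}=u\,w^*-w\,u^*$. Let $O(V,K)=\{P:P^TKP=K\}$, $\mathfrak o(V,K)=\{X:X^TK+KX=0\}$, $O(V,K)_{e_{n+2}}=\{P\in O(V,K):Pe_{n+2}=e_{n+2}\}$. A special tuple is a pair $(Y,y)$ with $Y\in\mathfrak o(V,K)$, $y\in V$. Two special tuples $(Y,y)$ and $(Y',y')$ are equivalent if there exist $P\in O(V,K)_{e_{n+2}}$, vectors $v,p\in V$ with $p^*(e_{n+2})=0$, and $v_0\in\mathbb R$ such that $Y'+L_{v,e_{n+2}}=P(Y+L_{p,y})P^{-1}$ and $y'=Py+v_0e_{n+2}$. (A special tuple $(Y,e_{n+2})$ is called a standardized affine special tuple.) *)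

(* Defs.v *)
From HB Require Import structures.
From mathcomp Require Import all_boot all_order all_algebra.
From mathcomp Require Import reals.
Set Implicit Arguments. Unset Strict Implicit. Unset Printing Implicit Defensive.
Import Order.TTheory GRing.Theory Num.Theory.
Local Open Scope ring_scope.

Section Defs.
Variables (R : realType) (n : nat).

(* V = R^(n+2) as column vectors; e_1 is index 0, e_(n+2) is index n+1 = ord_max. *)

(* K = [[0,0,1],[0,Kt,0],[1,0,0]] with block sizes 1, n, 1. *)
Definition mid (a : 'I_n) : 'I_(n.+2) := lift ord0 (widen_ord (leqnSn n) a).

Definition Kmat (Kt : 'M[R]_n) : 'M[R]_(n.+2) :=
  delta_mx ord0 ord_max + delta_mx ord_max ord0 +
  \sum_(a < n) \sum_(b < n) Kt a b *: delta_mx (mid a) (mid b).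

Definition elast : 'cV[R]_(n.+2) := delta_mx ord_max 0.

Definition vstar (K : 'M[R]_(n.+2)) (x : 'cV[R]_(n.+2)) : 'rV[R]_(n.+2) :=
  x^T *m K.

Definition Lop (K : 'M[R]_(n.+2)) (u w : 'cV[R]_(n.+2)) : 'M[R]_(n.+2) :=
  u *m vstar K w - w *m vstar K u.

Definition in_O (K P : 'M[R]_(n.+2)) : Prop := P^T *m K *m P = K.

Definition in_O_stab (K P : 'M[R]_(n.+2)) : Prop :=
  in_O K P /\ P *m elast = elast.

Definition in_o (K X : 'M[R]_(n.+2)) : Prop := X^T *m K + K *m X = 0.

Definition equiv_data (K Y : 'M[R]_(n.+2)) (y : 'cV[R]_(n.+2))
    (Y' : 'M[R]_(n.+2)) (y' : 'cV[R]_(n.+2))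
    (P : 'M[R]_(n.+2)) (v p : 'cV[R]_(n.+2)) (v0 : R) : Prop :=
  [/\ in_O_stab K P,
      vstar K p *m elast = 0,
      Y' + Lop K v elast = P *m (Y + Lop K p y) *m invmx P
    & y' = P *m y + v0 *: elast].

Definition special_equiv (K Y : 'M[R]_(n.+2)) (y : 'cV[R]_(n.+2))
    (Y' : 'M[R]_(n.+2)) (y' : 'cV[R]_(n.+2)) : Prop :=
  exists P v p v0, equiv_data K Y y Y' y' P v p v0.

End Defs.

(* Main.v *)
Require Import Defs.
From HB Require Import structures.
From mathcomp Require Import all_boot all_order all_algebra.
From mathcomp Require Import reals lra.
Import Order.TTheory GRing.Theory Num.Theory.
Local Open Scope ring_scope.
Set Implicit Arguments. Unset Strict Implicit.
Section G.
Variables (R : realType) (n : nat) (K : 'M[R]_(n.+2)).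
Hypothesis HK : K \in unitmx.

Lemma O_unit P : in_O K P -> P \in unitmx.
Proof.
rewrite /in_O => HP.
have := congr1 determinant HP.
rewrite !det_mulmx det_tr => E.
move: HK; rewrite !unitmxE !unitfE => hK.
apply/negP => /eqP h0; move: E; rewrite h0 !(mul0r, mulr0) => E.
by move: hK; rewrite -E eqxx.
Qed.

Lemma KinvP P : in_O K P -> K *m invmx P = P^T *m K.
Proof.
move=> HP; have hu := @O_unit P HP.
have HP' : P^T *m K *m P = K := HP.
by rewrite -{1}HP' -!mulmxA mulmxV // mulmx1.
Qed.

Lemma conjL P u w : in_O K P ->
  P *m Lop K u w *m invmx P = Lop K (P *m u) (P *m w).
Proof.
move=> HP; rewrite /Lop /vstar mulmxBr mulmxBl !trmx_mul.
by rewrite !mulmxA -!(mulmxA _ K) !KinvP // !mulmxA.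
Qed.

Lemma Lop_lin u1 u2 w : Lop K (u1 + u2) w = Lop K u1 w + Lop K u2 w.
Proof.
rewrite /Lop /vstar linearD /= !mulmxDl !mulmxDr.
rewrite opprD !addrA; congr (_ + _); rewrite -!addrA; congr (_ + _).
by rewrite addrC.
Qed.

Lemma Lop_opp u w : Lop K (- u) w = - Lop K u w.
Proof.
rewrite /Lop /vstar linearN /= !(mulNmx, mulmxN) opprB.
by rewrite opprK addrC.
Qed.

Lemma Lop0 w : Lop K 0 w = 0.
Proof. by rewrite /Lop /vstar trmx0 !mul0mx mulmx0 subrr. Qed.
End G.
Section K.
Variables (R : realType) (n : nat).

Definition Smx (A : 'M[R]_n) : 'M[R]_(n.+2) :=
  \sum_(a < n) \sum_(b < n) A a b *: delta_mx (mid a) (mid b).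

Lemma mid_inj : injective (@mid n).
Proof. by move=> a b /(congr1 val) /= [] /val_inj. Qed.

Lemma mid_neq0 (a : 'I_n) : (mid a == ord0 :> 'I_n.+2) = false.
Proof. by []. Qed.

Lemma mid_neqmax (a : 'I_n) : (mid a == ord_max :> 'I_n.+2) = false.
Proof. by apply/negbTE; rewrite -val_eqE /= eqSS neq_ltn ltn_ord. Qed.

Lemma max_neq0 : (ord_max == ord0 :> 'I_n.+2) = false.
Proof. by []. Qed.

Lemma deltaS (a b : 'I_n) B : delta_mx (mid a) (mid b) *m Smx B =
   \sum_(d < n) B b d *: delta_mx (mid a) (mid d).
Proof.
have E c : delta_mx (mid a) (mid b) *m
   (\sum_(d < n) B c d *: delta_mx (mid c) (mid d)) =
   if c == b then \sum_(d < n) B b d *: delta_mx (mid a) (mid d) else 0.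
  rewrite mulmx_sumr; case: eqP => [->|hc].
    by apply: eq_bigr => d _; rewrite -scalemxAr mul_delta_mx.
  apply: big1 => d _.
  rewrite -scalemxAr mul_delta_mx_cond (inj_eq mid_inj).
  by case: eqP => [h|]; [case: hc | rewrite mulr0n scaler0].
rewrite /Smx mulmx_sumr; under eq_bigr => c _ do rewrite E.
by rewrite -big_mkcond big_pred1_eq.
Qed.

Lemma SmxM A B : Smx A *m Smx B = Smx (A *m B).
Proof.
rewrite {1}/Smx mulmx_suml; apply: eq_bigr => a _.
rewrite mulmx_suml.
under eq_bigr => b _ do rewrite -scalemxAl deltaS scaler_sumr.
rewrite exchange_big /=; apply: eq_bigr => d _.
rewrite mxE scaler_suml; apply: eq_bigr => b _.
by rewrite scalerA.
Qed.

Lemma Smx1 : Smx 1%:M = \sum_(a < n) delta_mx (mid a) (mid a).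
Proof.
rewrite /Smx; apply: eq_bigr => a _.
rewrite (bigD1 a) //= big1 ?addr0; first by rewrite mxE eqxx scale1r.
by move=> b hb; rewrite mxE eq_sym (negbTE hb) scale0r.
Qed.

Lemma SmxD A (i u : 'I_n.+2) : (forall a, mid a != i) ->
  Smx A *m delta_mx i u = 0.
Proof.
move=> h; rewrite /Smx mulmx_suml; apply: big1 => a _.
rewrite mulmx_suml; apply: big1 => b _.
by rewrite -scalemxAl mul_delta_mx_0 ?scaler0.
Qed.

Lemma DSmx A (i u : 'I_n.+2) : (forall a, mid a != i) ->
  delta_mx u i *m Smx A = 0.
Proof.
move=> h; rewrite /Smx mulmx_sumr; apply: big1 => a _.
rewrite mulmx_sumr; apply: big1 => b _.
by rewrite -scalemxAr mul_delta_mx_0 ?scaler0 // eq_sym.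
Qed.

Lemma Kmat_sq (Kt : 'M[R]_n) : Kt *m Kt = 1%:M -> Kmat Kt *m Kmat Kt = 1%:M.
Proof.
move=> HK.
have -> : Kmat Kt = delta_mx ord0 ord_max + delta_mx ord_max ord0 + Smx Kt by [].
have h0 : forall a : 'I_n, mid a != ord0 :> 'I_n.+2 by move=> a; rewrite mid_neq0.
have hm : forall a : 'I_n, mid a != ord_max :> 'I_n.+2 by move=> a; rewrite mid_neqmax.
rewrite !mulmxDl !mulmxDr SmxM HK Smx1 !SmxD // !DSmx //.
rewrite !mul_delta_mx !mul_delta_mx_0 ?max_neq0 //.
rewrite !addr0 !add0r mx1_sum_delta big_ord_recl big_ord_recr /=.
have -> : lift ord0 ord_max = ord_max :> 'I_n.+2 by apply: val_inj.
rewrite -addrA; congr (_ + _); rewrite addrC; congr (_ + _).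
all: try by apply: eq_bigr => a _; congr delta_mx; apply: val_inj.
Qed.
End K.

Theorem lemma7 (R : realType) (n : nat) (Kt : 'M[R]_n)
  (HKsym : Kt^T = Kt) (HKinv : Kt *m Kt = 1%:M)
  (Y Y' : 'M[R]_(n.+2))
  (HY : in_o (Kmat Kt) Y) (HY' : in_o (Kmat Kt) Y') :
  (special_equiv (Kmat Kt) Y (elast R n) Y' (elast R n) <->
   exists (P : 'M[R]_(n.+2)) (w : 'cV[R]_(n.+2)),
     in_O_stab (Kmat Kt) P /\
     Y' = P *m (Y + Lop (Kmat Kt) w (elast R n)) *m invmx P)
  /\
  (forall (P : 'M[R]_(n.+2)) (v p : 'cV[R]_(n.+2)) (v0 : R),
     equiv_data (Kmat Kt) Y (elast R n) Y' (elast R n) P v p v0 -> v0 = 0).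
Proof.
have HKu : Kmat Kt \in unitmx := (mulmx1_unit (Kmat_sq HKinv)).1.
split; last first.
  move=> P v p v0 [[HO He] _ _ Hy]; move: Hy; rewrite He.
  move/(congr1 (fun M : 'cV[R]_(n.+2) => M ord_max 0)); rewrite !mxE !eqxx /=.
  lra.
split.
  case=> P [v [p [v0 [[HO He] Hp HY2 Hy]]]].
  have hu := O_unit HKu HO.
  exists P, (p - invmx P *m v); split; first by split.
  have EL : Lop (Kmat Kt) v (elast R n) =
     P *m Lop (Kmat Kt) (invmx P *m v) (elast R n) *m invmx P.
    by rewrite conjL // mulmxA mulmxV // mul1mx He.
  apply: (addIr (Lop (Kmat Kt) v (elast R n))); rewrite HY2 EL.
  rewrite -mulmxDl -mulmxDr Lop_lin Lop_opp.
  by rewrite -addrA subrK.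
case=> P [w [[HO He] ->]].
exists P, (- (P *m w)), 0, 0; split => //.
- by rewrite /vstar trmx0 !mul0mx.
- rewrite Lop0 addr0 Lop_opp -{2}He -conjL // mulmxDr mulmxDl.
  by rewrite -addrA subrr addr0.
- by rewrite scale0r addr0 He.
Qed.
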